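(* Let $V$ be a real inner product space with norm $\lVert x\rVert=\sqrt{\langle x,x\rangle}$, and consider $n$ agents running the ApproachExtreme algorithm (described in the context) under an arbitrary communication pattern $G_1,G_2,\dots$ in which every communication graph $G_t$ is non-split, starting from arbitrary initial values $y_1(0),\dots,y_n(0)\in V$. Then for every round $t\ge 1$, \[ \Delta\big(y(t)\big)\le \sqrt{\tfrac{31}{32}}\;\Delta\big(y(t-1)\big), \] and for every $\varepsilon>0$ the convergence time satisfies $T(\varepsilon)\le \left\lceil \log_{\sqrt{32/31}} \frac{\Delta}{\varepsilon}\right\rceil$, where $\Delta=\Delta\big(y(0)\big)$ (i.e., $\Delta(y(\tau))\le\varepsilon$ for every integer $\tau\ge 0$ with $\tau\ge \lceil \log_{\sqrt{32/31}} (\Delta/\varepsilon)\rceil$). Moreover, if $V=\mathbb{R}$ (with the usual inner product), then $\Delta\big(y(t)\big)\le \tfrac34\,\Delta\big(y(t-1)\big)$ for every $t\ge1$, and $T(\varepsilon)\le \left\lceil \log_{4/3} \frac{\Delta}{\varepsilon}\right\rceil$.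
   Context: Dynamic network model: there are $n$ agents $1,\dots,n$ communicating in rounds $t=1,2,\dots$. In round $t$, communication is given by a directed graph $G_t$ on the vertex set $\{1,\dots,n\}$ containing every self-loop $(i,i)$; the message broadcast by $i$ in round $t$ is received by $j$ iff $(i,j)\in G_t$. A directed graph is non-split if every pair of nodes $i,j$ has a common in-neighbor $k$ (i.e., $(k,i)$ and $(k,j)$ are both edges). Each agent $i$ holds a value $y_i\in V$; $y_i(0)$ is its initial value and $y_i(t)$ its value at the end of round $t$; $y(t)=(y_1(t),\dots,y_n(t))$. ApproachExtreme algorithm: in round $t$ each agent $i$ broadcasts $y_i(t-1)$, lets $\mathrm{Rcv}_i(t)=\{y_j(t-1): (j,i)\in G_t\}$ be the set of received values, chooses $b\in \mathrm{Rcv}_i(t)$ maximizing $\lVert y_i(t-1)-b\rVert$ (ties broken arbitrarily), and sets $y_i(t)=(y_i(t-1)+b)/2$. Notation: for $x=(x_1,\dots,x_n)\in V^n$, $\Delta(x)=\max_{i,j}\lVert x_i-x_j\rVert$. The convergence time of an execution is $T(\varepsilon)=\min\{t\ge0 : \forall \tau\ge t,\ \Delta(y(\tau))\le\varepsilon\}$. *)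

(* Defs.v *)
From HB Require Import structures.
From mathcomp Require Import all_boot all_order all_algebra.
From mathcomp Require Import reals exp.
Set Implicit Arguments. Unset Strict Implicit. Unset Printing Implicit Defensive.
Import Order.TTheory GRing.Theory Num.Theory.
Local Open Scope ring_scope.

Record inner_product (R : realType) (V : lmodType R) := InnerProduct {
  ip : V -> V -> R;
  ip_sym : forall x y, ip x y = ip y x;
  ip_linear : forall (a : R) (x y z : V), ip (a *: x + y) z = a * ip x z + ip y z;
  ip_ge0 : forall x, 0 <= ip x x;
  ip_eq0 : forall x, ip x x = 0 -> x = 0
}.

Definition ipnorm (R : realType) (V : lmodType R) (P : inner_product V) (x : V) : R :=
  Num.sqrt (ip P x x).

Definition R_inner_product (R : realType) : inner_product R^o.
Proof.
refine (@InnerProduct R R^o (fun x y : R => x * y) _ _ _ _).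
- by move=> x y; rewrite mulrC.
- by move=> a x y z; rewrite /GRing.scale /= mulrDl mulrA.
- by move=> x; rewrite -expr2 sqr_ge0.
- by move=> x /eqP; rewrite mulf_eq0 orbb => /eqP.
Defined.

(* Communication pattern: G t j i means (j,i) is an edge of G_t, i.e. i receives
   the message of j in round t. *)
Definition comm_pattern (n : nat) := nat -> rel 'I_n.

Definition has_self_loops (n : nat) (G : rel 'I_n) := forall i, G i i.

Definition non_split (n : nat) (G : rel 'I_n) :=
  forall i j : 'I_n, exists k : 'I_n, G k i /\ G k j.

Definition Delta (R : realType) (V : lmodType R) (P : inner_product V) (n : nat)
  (x : 'I_n -> V) : R :=
  \big[Num.max/0]_(ij : 'I_n * 'I_n) ipnorm P (x ij.1 - x ij.2).

(* y is an execution of ApproachExtreme under G (ties broken arbitrarily):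
   in round t >= 1 (here t.+1), agent i picks a received value y_j(t-1)
   at maximal distance from y_i(t-1) and moves to the midpoint. *)
Definition approach_extreme_exec (R : realType) (V : lmodType R) (P : inner_product V)
  (n : nat) (G : comm_pattern n) (y : nat -> 'I_n -> V) :=
  forall (t : nat) (i : 'I_n), exists j : 'I_n,
    [/\ G t.+1 j i,
        (forall k : 'I_n, G t.+1 k i ->
           ipnorm P (y t i - y t k) <= ipnorm P (y t i - y t j)) &
        y t.+1 i = (2%:R)^-1 *: (y t i + y t j)].

Definition logb (R : realType) (b x : R) : R := ln x / ln b.

(* Main.v *)
Require Import Defs.
From HB Require Import structures.
From mathcomp Require Import all_boot all_order all_algebra.
From mathcomp Require Import reals exp.
From mathcomp Require Import lra.
Import Order.TTheory GRing.Theory Num.Theory.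
Set Implicit Arguments. Unset Strict Implicit.
Local Open Scope ring_scope.


Section IP.
Variables (R : realType) (V : lmodType R) (P : inner_product V).
Local Notation N x := (ip P x x).

Lemma ipD x y z : ip P (x + y) z = ip P x z + ip P y z.
Proof. by have := ip_linear P 1 x y z; rewrite scale1r mul1r. Qed.
Lemma ip0 z : ip P 0 z = 0.
Proof. have := ipD 0 0 z; rewrite addr0; lra. Qed.
Lemma ipZ a x z : ip P (a *: x) z = a * ip P x z.
Proof. by have := ip_linear P a x 0 z; rewrite addr0 ip0 addr0. Qed.
Lemma ipN x z : ip P (- x) z = - ip P x z.
Proof. by rewrite -scaleN1r ipZ mulN1r. Qed.
Lemma ipDr x y z : ip P z (x + y) = ip P z x + ip P z y.
Proof. by rewrite ip_sym ipD !(ip_sym P z). Qed.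
Lemma ipNr x z : ip P z (- x) = - ip P z x.
Proof. by rewrite ip_sym ipN ip_sym. Qed.
Lemma ipZr a x z : ip P z (a *: x) = a * ip P z x.
Proof. by rewrite ip_sym ipZ ip_sym. Qed.

Lemma NDexp x y : N (x + y) = N x + 2 * ip P x y + N y.
Proof. rewrite ipD !ipDr (ip_sym P y x); lra. Qed.
Lemma NBexp x y : N (x - y) = N x - 2 * ip P x y + N y.
Proof. rewrite NDexp ipNr ipN ipNr opprK; lra. Qed.
Lemma paral x y : N (x + y) + N (x - y) = 2 * N x + 2 * N y.
Proof. rewrite NDexp NBexp; lra. Qed.
Lemma NDle x y : N (x + y) <= 2 * N x + 2 * N y.
Proof. have := paral x y; have := ip_ge0 P (x - y); lra. Qed.
Lemma NN x : N (- x) = N x.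
Proof. by rewrite ipN ipNr opprK. Qed.
Lemma NZ a x : N (a *: x) = a ^+ 2 * N x.
Proof. by rewrite ipZ ipZr mulrA expr2. Qed.
Lemma ipnormE x : ipnorm P x ^+ 2 = N x.
Proof. by rewrite /ipnorm sqr_sqrtr // ip_ge0. Qed.
Lemma ipnorm_ge0 x : 0 <= ipnorm P x.
Proof. exact: sqrtr_ge0. Qed.

End IP.


Section V.
Variables (R : realType) (V : lmodType R).
Implicit Types u p v q z : V.
Lemma e0 u p v q : (u + p) - (v + q) = (u - v) + (p - q).
Proof. by rewrite opprD addrACA. Qed.
Lemma e1 u p v q : 2^-1 *: (u + p) - 2^-1 *: (v + q) = (2^-1 : R) *: ((u - v) + (p - q)).
Proof. by rewrite -scalerBr e0. Qed.
Lemma e2 u p v q : (u - v) + (p - q) = (u - q) + (p - v).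
Proof. by rewrite -e0 [v + q]addrC e0. Qed.
Lemma e3 u p v q : (u - v) - (p - q) = (u - p) - (v - q).
Proof. by rewrite -!addrA; congr (_ + _); rewrite !opprB [LHS]addrCA [RHS]addrCA; congr (_ + _); rewrite addrC. Qed.
Lemma e4 u p v q : (u - q) - (p - v) = (u - p) + (v - q).
Proof. by rewrite -!addrA; congr (_ + _); rewrite !opprB [LHS]addrCA [RHS]addrCA; congr (_ + _); rewrite addrC. Qed.
Lemma e6 u p z : p - z = (p - u) + (u - z).
Proof. by rewrite addrA subrK. Qed.
Lemma e5 u p v q z : (u - v) + (p - q) = ((u - z) + (p - z)) - ((v - z) + (q - z)).
Proof. by rewrite e0; congr (_ + _); rewrite opprB addrA subrK. Qed.
End V.


Lemma normsq_le (R : realType) (V : lmodType R) (P : inner_product V) x D :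
  ipnorm P x <= D -> ip P x x <= D ^+ 2.
Proof. move=> h; rewrite -ipnormE; have := ipnorm_ge0 P x; nra. Qed.
Lemma normsq_le2 (R : realType) (V : lmodType R) (P : inner_product V) x y :
  ipnorm P x <= ipnorm P y -> ip P x x <= ip P y y.
Proof. move=> h; rewrite -!ipnormE; have := ipnorm_ge0 P x; nra. Qed.

Lemma key_ip (R : realType) (V : lmodType R) (P : inner_product V) (u p v q z : V) (D : R) :
  0 <= D ->
  ipnorm P (u - z) <= ipnorm P (u - p) -> ipnorm P (v - z) <= ipnorm P (v - q) ->
  ipnorm P (u - v) <= D -> ipnorm P (u - q) <= D -> ipnorm P (p - v) <= D ->
  ipnorm P (p - q) <= D ->
  ipnorm P (2^-1 *: (u + p) - 2^-1 *: (v + q)) <= Num.sqrt (31%:R / 32%:R) * D.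
Proof.
move=> D0 /normsq_le2 a1 /normsq_le2 a2 /normsq_le b1 /normsq_le b2 /normsq_le b3 /normsq_le b4.
have H1 := paral P (u - v) (p - q); rewrite e3 in H1.
have H2 := paral P (u - q) (p - v); rewrite -e2 e4 in H2.
have H3 := paral P (u - p) (v - q).
have H4 := NDle P ((u - z) + (p - z)) (- ((v - z) + (q - z))); rewrite NN -e5 in H4.
have H5 := NDle P (u - z) (p - z).
have H6 := NDle P (v - z) (q - z).
have H7 := NDle P (p - u) (u - z); rewrite -e6 -(NN P (p - u)) opprB in H7.
have H8 := NDle P (q - v) (v - z); rewrite -e6 -(NN P (q - v)) opprB in H8.
have Hm : ip P (2^-1 *: (u + p) - 2^-1 *: (v + q)) (2^-1 *: (u + p) - 2^-1 *: (v + q))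
   = 4^-1 * ip P ((u - v) + (p - q)) ((u - v) + (p - q)).
  by rewrite e1 NZ; congr (_ * _); rewrite expr2 -invfM; congr (_^-1); lra.
have g : ip P (2^-1 *: (u + p) - 2^-1 *: (v + q)) (2^-1 *: (u + p) - 2^-1 *: (v + q))
   <= 31%:R / 32%:R * D ^+ 2.
  rewrite Hm.
  have := ip_ge0 P (u - z); have := ip_ge0 P (v - z); have := ip_ge0 P (u - p).
  have := ip_ge0 P (v - q); have := ip_ge0 P ((u - p) - (v - q)); have := ip_ge0 P ((u - p) + (v - q)).
  lra.
rewrite /ipnorm -(ger0_norm D0) -sqrtr_sqr -sqrtrM; last by lra.
by rewrite ler_sqrt // mulr_ge0 // ?sqr_ge0; lra.
Qed.

Lemma ipnormR (R : realType) (x : R^o) : ipnorm (R_inner_product R) x = `|x|.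
Proof. by rewrite /ipnorm /= -expr2 sqrtr_sqr. Qed.

Lemma key_R (R : realType) (u p v q z D : R) :
  `|u - z| <= `|u - p| -> `|v - z| <= `|v - q| ->
  `|u - v| <= D -> `|u - q| <= D -> `|p - v| <= D -> `|p - q| <= D ->
  `|2^-1 * (u + p) - 2^-1 * (v + q)| <= 3%:R / 4%:R * D.
Proof.
move=> /ler_normlP [h1 h2] /ler_normlP [h3 h4].
move=> /ler_normlP [? ?] /ler_normlP [? ?] /ler_normlP [? ?] /ler_normlP [? ?].
have [ha|ha] : `|u - p| = u - p \/ `|u - p| = - (u - p).
  by case: (lerP 0 (u - p)) => h; [left; rewrite ger0_norm | right; rewrite ltr0_norm].
all: have [hb|hb] : `|v - q| = v - q \/ `|v - q| = - (v - q) by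
  case: (lerP 0 (v - q)) => h; [left; rewrite ger0_norm | right; rewrite ltr0_norm].
all: rewrite ?ha ?hb in h1 h2 h3 h4; apply/ler_normlP; split; lra.
Qed.


Lemma conv_gen (R : realType) (d : nat -> R) (c b : R) :
  0 <= c -> c * b = 1 -> 1 < b -> (forall t, 0 <= d t) ->
  (forall t, d t.+1 <= c * d t) ->
  forall eps : R, 0 < eps -> forall tau : nat,
  Num.ceil (logb b (d 0%N / eps)) <= tau%:Z -> d tau <= eps.
Proof.
move=> c0 cb b1 d0 dS eps e0 tau.
have dt : d tau <= c ^+ tau * d 0%N.
  elim: tau => [|k IH]; first by rewrite expr0 mul1r.
  apply: (le_trans (dS k)); rewrite exprS -mulrA; exact: ler_wpM2l.
have [d00|dpos] := eqVneq (d 0%N) 0.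
  by move=> _; rewrite d00 mulr0 in dt; apply: (le_trans dt); exact: ltW.
have dp : 0 < d 0%N by rewrite lt_def dpos d0.
rewrite ceil_le_int /logb => h.
have lb : 0 < ln b by rewrite ln_gt0.
have xp : 0 < d 0%N / eps by exact: divr_gt0.
have bp : 0 < b ^+ tau by apply: exprn_gt0; lra.
have h2 : ln (d 0%N / eps) <= ln (b ^+ tau).
  rewrite lnXn; last by lra.
  rewrite ler_pdivrMr // in h; rewrite -mulr_natr [X in _ <= X]mulrC.
  by move: h; rewrite pmulrn.
move: h2; rewrite ler_ln ?posrE // ler_pdivrMr // => h3.
apply: (le_trans dt).
have : c ^+ tau * d 0%N <= c ^+ tau * (b ^+ tau * eps).
  by apply: ler_wpM2l => //; exact: exprn_ge0.
by rewrite mulrA -exprMn cb expr1n mul1r.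
Qed.


Section Del.
Variables (R : realType) (V : lmodType R) (P : inner_product V) (n : nat).

Lemma Delta_ge0 (x : 'I_n -> V) : 0 <= Delta P x.
Proof.
rewrite /Delta; elim/big_ind: _ => [//|a b ha hb|ij _]; first by rewrite le_max ha.
exact: ipnorm_ge0.
Qed.

Lemma Delta_ge (x : 'I_n -> V) i j : ipnorm P (x i - x j) <= Delta P x.
Proof. by rewrite /Delta (bigD1 (i, j)) //= le_max lexx. Qed.

Lemma Delta_le (x : 'I_n -> V) c : 0 <= c ->
  (forall i j, ipnorm P (x i - x j) <= c) -> Delta P x <= c.
Proof.
move=> c0 h; rewrite /Delta; elim/big_ind: _ => [//|a b ha hb|ij _]; first by rewrite ge_max ha hb.
exact: h.
Qed.

Lemma step_gen (G : comm_pattern n) (y : nat -> 'I_n -> V) (c : R) :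
  0 <= c ->
  (forall u p v q z D, 0 <= D ->
    ipnorm P (u - z) <= ipnorm P (u - p) -> ipnorm P (v - z) <= ipnorm P (v - q) ->
    ipnorm P (u - v) <= D -> ipnorm P (u - q) <= D -> ipnorm P (p - v) <= D ->
    ipnorm P (p - q) <= D ->
    ipnorm P (2^-1 *: (u + p) - 2^-1 *: (v + q)) <= c * D) ->
  (forall t, non_split (G t)) ->
  approach_extreme_exec P G y ->
  forall t, Delta P (y t.+1) <= c * Delta P (y t).
Proof.
move=> c0 key ns ex t; apply: Delta_le; first by rewrite mulr_ge0 // Delta_ge0.
move=> i j.
have [k [hki hkj]] := ns t.+1 i j.
have [a [_ ha ya]] := ex t i.
have [b [_ hb yb]] := ex t j.
rewrite ya yb; apply: (key _ _ _ _ (y t k)); rewrite ?Delta_ge0 ?Delta_ge //.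
  exact: ha.
exact: hb.
Qed.
End Del.

Unset Implicit Arguments.

Theorem theorem2 (R : realType) :
  (forall (V : lmodType R) (P : inner_product V) (n : nat) (G : comm_pattern n)
          (y : nat -> 'I_n -> V),
     (forall t, has_self_loops (G t)) ->
     (forall t, non_split (G t)) ->
     approach_extreme_exec P G y ->
     (forall t : nat,
        Delta P (y t.+1) <= Num.sqrt (31%:R / 32%:R) * Delta P (y t)) /\
     (forall eps : R, 0 < eps -> forall tau : nat,
        Num.ceil (logb (Num.sqrt (32%:R / 31%:R)) (Delta P (y 0%N) / eps)) <= tau%:Z ->
        Delta P (y tau) <= eps)) /\
  (forall (n : nat) (G : comm_pattern n) (y : nat -> 'I_n -> R^o),
     (forall t, has_self_loops (G t)) ->
     (forall t, non_split (G t)) ->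
     approach_extreme_exec (R_inner_product R) G y ->
     (forall t : nat,
        Delta (R_inner_product R) (y t.+1) <= (3%:R / 4%:R) * Delta (R_inner_product R) (y t)) /\
     (forall eps : R, 0 < eps -> forall tau : nat,
        Num.ceil (logb (4%:R / 3%:R) (Delta (R_inner_product R) (y 0%N) / eps)) <= tau%:Z ->
        Delta (R_inner_product R) (y tau) <= eps)).
Proof.
split.
  move=> V P n G y _ ns ex.
  have st := step_gen (sqrtr_ge0 _) (@key_ip R V P) ns ex.
  split=> //.
  apply: conv_gen (sqrtr_ge0 _) _ _ _ st.
  - rewrite -sqrtrM; last by lra.
    have -> : 31%:R / 32%:R * (32%:R / 31%:R) = 1 :> R by lra.
    exact: sqrtr1.
  - by rewrite -{1}sqrtr1 ltr_sqrt; lra.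
  - by move=> t; exact: Delta_ge0.
move=> n G y _ ns ex.
have k : forall (u p v q z : R^o) D, 0 <= D ->
    ipnorm (R_inner_product R) (u - z) <= ipnorm (R_inner_product R) (u - p) ->
    ipnorm (R_inner_product R) (v - z) <= ipnorm (R_inner_product R) (v - q) ->
    ipnorm (R_inner_product R) (u - v) <= D -> ipnorm (R_inner_product R) (u - q) <= D ->
    ipnorm (R_inner_product R) (p - v) <= D -> ipnorm (R_inner_product R) (p - q) <= D ->
    ipnorm (R_inner_product R) (2^-1 *: (u + p) - 2^-1 *: (v + q)) <= 3%:R / 4%:R * D.
  move=> u p v q z D _; rewrite !ipnormR; exact: key_R.
have st := step_gen (_ : 0 <= 3%:R / 4%:R) k ns ex.
have c0 : 0 <= 3%:R / 4%:R :> R by lra.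
have {}st := st c0.
split=> //.
apply: conv_gen c0 _ _ _ st.
- lra.
- lra.
- by move=> t; exact: Delta_ge0.
Qed.
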